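(* Let $G=(V,E)$ be an undirected graph and $f:V\to\mathbb{Z}\cup\{-\infty\}$, $g:V\to\mathbb{Z}\cup\{+\infty\}$ with $f\le g$. An $(f,g)$-bounded orientation $D$ of $G$ is decreasingly minimal among the $(f,g)$-bounded orientations of $G$ if and only if there is no directed path in $D$ from a node $s$ to a node $t$ for which $\varrho_D(t)\ge\varrho_D(s)+2$, $\varrho_D(s)<g(s)$ and $\varrho_D(t)>f(t)$.
   Context: An orientation $D$ is $(f,g)$-bounded if $f(v)\le\varrho_D(v)\le g(v)$ for every $v\in V$, where $\varrho_D(v)$ is the number of arcs with head $v$. It is decreasingly minimal among a class of orientations if its in-degree vector $(\varrho_D(v))_v$ has largest component as small as possible within the class, within this second largest as small as possible, and so on. *)

(* Defs.v *)
From mathcomp Require Import all_boot all_order all_algebra.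
Set Implicit Arguments. Unset Strict Implicit. Unset Printing Implicit Defensive.
Import Order.TTheory GRing.Theory Num.Theory.

(* An undirected (multi)graph G = (V, E): edge e has endpoints ends e.
   An orientation D : {ffun E -> bool}; D e = true orients e from
   (ends e).1 to (ends e).2, D e = false the other way. *)
Section Orient.
Variables (V E : finType) (ends : E -> V * V).

Definition otail (D : {ffun E -> bool}) (e : E) : V :=
  if D e then (ends e).1 else (ends e).2.
Definition ohead (D : {ffun E -> bool}) (e : E) : V :=
  if D e then (ends e).2 else (ends e).1.

Definition indeg (D : {ffun E -> bool}) (v : V) : nat :=
  #|[set e | ohead D e == v]|.

Definition arcrel (D : {ffun E -> bool}) : rel V :=
  fun u w => [exists e, (otail D e == u) && (ohead D e == w)].
Definition dipath (D : {ffun E -> bool}) (s t : V) : bool := connect (arcrel D) s t.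

(* Bounds: f : V -> option int with None = -oo, g : V -> option int with None = +oo. *)
Definition ge_lo (f : option int) (x : int) : bool :=
  if f is Some a then (a <= x)%R else true.
Definition le_hi (g : option int) (x : int) : bool :=
  if g is Some b then (x <= b)%R else true.
Definition lt_hi (g : option int) (x : int) : bool :=
  if g is Some b then (x < b)%R else true.
Definition gt_lo (f : option int) (x : int) : bool :=
  if f is Some a then (a < x)%R else true.
Definition bounds_ok (f g : V -> option int) : Prop :=
  forall v, match f v, g v with Some a, Some b => (a <= b)%R | _, _ => true end : bool.

Definition fg_bounded (f g : V -> option int) (D : {ffun E -> bool}) : Prop :=
  forall v, ge_lo (f v) (indeg D v)%:Z && le_hi (g v) (indeg D v)%:Z.

Definition dec_vec (D : {ffun E -> bool}) : seq nat :=
  sort geq [seq indeg D v | v <- enum V].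

(* strict lexicographic order on sequences (used on equal-length sequences) *)
Definition lexlt (s t : seq nat) : Prop :=
  exists i, take i s = take i t /\ nth 0 s i < nth 0 t i.

Definition decmin (f g : V -> option int) (D : {ffun E -> bool}) : Prop :=
  fg_bounded f g D /\
  forall D' : {ffun E -> bool}, fg_bounded f g D' -> ~ lexlt (dec_vec D') (dec_vec D).
End Orient.

(* Main.v *)
Require Import Defs.
From mathcomp Require Import all_boot all_order all_algebra zify.
Set Implicit Arguments. Unset Strict Implicit. Unset Printing Implicit Defensive.

Definition phi (N : nat) (s : seq nat) : nat := \sum_(x <- s) N ^ x.

Lemma phi_bound N x s : 0 < N -> all (fun y => y <= x) s -> phi N s <= size s * N ^ x.
Proof.
move=> N0; elim: s => [|y s IH] /=; first by rewrite /phi big_nil.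
case/andP=> hy hs; rewrite /phi big_cons -/(phi N s) mulSn leq_add //.
  by rewrite leq_pexp2l. 
exact: IH.
Qed.

Lemma lexlt_cons y b x a : lexlt (y :: b) (x :: a) <-> y < x \/ (y = x /\ lexlt b a).
Proof.
split.
  case=> [[|i]] /= [ht hn]; first by left.
  case: ht => -> ht; right; split=> //; by exists i.
case=> [h|[-> [i [ht hn]]]]; first by exists 0.
by exists i.+1 => /=; rewrite ht.
Qed.

Lemma lexlt_nil : ~ lexlt [::] [::].
Proof. by case=> [[|i]] [] //. Qed.

Lemma sorted_all x a : sorted geq (x :: a) -> all (fun y => y <= x) a.
Proof.
move=> h; have := order_path_min _ h.
  move=> H; have {}H := H (fun a b c (h1 : b >= a) (h2 : a >= c) => leq_trans h2 h1).
  by apply: sub_all H => y.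
Qed.

Lemma lex_phi N a b : size a = size b -> size a < N -> sorted geq a -> sorted geq b ->
  (lexlt b a <-> phi N b < phi N a).
Proof.
elim: a b => [|x a IH] [|y b] //=.
  by move=> _ _ _ _; split=> [/lexlt_nil|] //; rewrite /phi !big_nil.
move=> [hs] hN sa sb.
have N0 : 0 < N by apply: leq_ltn_trans hN.
have ha := sorted_all sa; have hb := sorted_all sb.
have pa := phi_bound N0 ha; have pb := phi_bound N0 hb.
have sa2 := path_sorted sa; have sb2 := path_sorted sb.
have hN' : size a < N by apply: ltnW.
rewrite /phi !big_cons -!/(phi N _) lexlt_cons.
have lt1 : forall u, N ^ u + size a * N ^ u < N ^ u.+1.
  by move=> u; rewrite -mulSn expnS ltn_pmul2r // expn_gt0 N0.
case: (ltngtP y x) => hxy.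
- split=> _; last by left.
  have h1 := lt1 y; rewrite -hs in pb.
  have h2 : N ^ y.+1 <= N ^ x by rewrite leq_pexp2l.
  lia.
- split=> [[h|[e _]]|h]; try lia.
  have h1 := lt1 x.
  have h2 : N ^ x.+1 <= N ^ y by rewrite leq_pexp2l.
  lia.
- subst y; rewrite (IH b hs hN' sa2 sb2) ltn_add2l.
  split=> [[//|[_ h]]//|h]; by right.
Qed.

Definition flip (E : finType) (D : {ffun E -> bool}) (e0 : E) : {ffun E -> bool} :=
  [ffun e => if e == e0 then ~~ D e else D e].

Definition HR (V E : finType) (ends : E -> V * V) (Dr D : {ffun E -> bool}) : rel V :=
  fun u w => [exists e, [&& Dr e != D e, otail ends Dr e == u & Defs.ohead ends Dr e == w]].

Definition diffc (E : finType) (Dr D : {ffun E -> bool}) := #|[set e | Dr e != D e]|.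

Lemma indeg_sum (V E : finType) (ends : E -> V * V) D v :
  indeg ends D v = \sum_e (Defs.ohead ends D e == v).
Proof.
rewrite /indeg -sum1_card big_mkcond /=; apply: eq_bigr => e _.
by rewrite inE; case: (_ == _).
Qed.

Lemma indeg_flip (V E : finType) (ends : E -> V * V) D e0 v :
  indeg ends (flip D e0) v + (Defs.ohead ends D e0 == v) = indeg ends D v + (otail ends D e0 == v).
Proof.
rewrite !indeg_sum (bigD1 e0) //= [in RHS](bigD1 e0) //=.
have -> : Defs.ohead ends (flip D e0) e0 = otail ends D e0.
  by rewrite /Defs.ohead /otail /flip ffunE eqxx; case: (D e0).
have -> : \sum_(i | i != e0) (Defs.ohead ends (flip D e0) i == v) =
          \sum_(i | i != e0) (Defs.ohead ends D i == v).
  by apply: eq_bigr => e he; rewrite /Defs.ohead /flip ffunE (negbTE he).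
lia.
Qed.

Lemma diffc_flip (E : finType) (Dr D : {ffun E -> bool}) e0 :
  Dr e0 != D e0 -> diffc Dr (flip D e0) < diffc Dr D.
Proof.
move=> h; apply: proper_card; apply/properP; split.
  apply/subsetP=> e; rewrite !inE /flip ffunE; case: (eqVneq e e0) => [->|] //= _.
exists e0; rewrite !inE // /flip ffunE eqxx.
by move: h; case: (Dr e0); case: (D e0).
Qed.

Lemma flip_path (V E : finType) (ends : E -> V * V) (Dr : {ffun E -> bool}) :
  forall p D u, uniq (u :: p) -> path (HR ends Dr D) u p -> p != [::] ->
  exists D2, [/\ indeg ends D2 u + 1 = indeg ends D u,
     indeg ends D2 (last u p) = indeg ends D (last u p) + 1,
     (forall v, v != u -> v != last u p -> indeg ends D2 v = indeg ends D v) &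
     diffc Dr D2 < diffc Dr D].
Proof.
elim=> [//|x p IH] D u /= /andP [hu hx] /andP [hux hp] _.
case/existsP: hux => e0 /and3P [hd /eqP ht /eqP hh].
have ht' : Defs.ohead ends D e0 = u.
  by rewrite -ht /Defs.ohead /otail; move: hd; case: (Dr e0); case: (D e0).
have hh' : otail ends D e0 = x.
  by rewrite -hh /Defs.ohead /otail; move: hd; case: (Dr e0); case: (D e0).
have F v := indeg_flip ends D e0 v.
rewrite ht' hh' in F.
set D1 := flip D e0 in F *.
have ux : u != x by apply: contraNneq hu => ->; rewrite inE eqxx.
have dlt := diffc_flip hd.
have Fu : indeg ends D1 u + 1 = indeg ends D u.
  move: (F u); rewrite eqxx eq_sym (negbTE ux). lia.
have Fx : indeg ends D1 x = indeg ends D x + 1.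
  by have := F x; rewrite eqxx (negbTE ux) /=; lia.
have Fo : forall v, v != u -> v != x -> indeg ends D1 v = indeg ends D v.
  by move=> v hvu hvx; have := F v; rewrite eq_sym (negbTE hvu) eq_sym (negbTE hvx); lia.
case: p IH hu hx hp => [|y p] IH hu hx hp.
  by exists D1; split.
have hp1 : path (HR ends Dr D1) x (y :: p).
  apply: (@sub_in_path _ (predC1 u) (HR ends Dr D)) hp; last first.
    by apply/allP => z hz /=; apply: contraNneq hu => <-.
  move=> a b /= ha _ /existsP [e /and3P [h1 h2 h3]].
  apply/existsP; exists e; rewrite h2 h3 andbT.
  have ne : e != e0 by apply: contraNneq ha => ee; rewrite -(eqP h2) ee ht.
  by rewrite /D1 /flip ffunE (negbTE ne) andbT.
have [D2 [G1 G2 G3 G4]] := IH D1 x hx hp1 isT.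
set w := last x (y :: p).
have wp : w \in y :: p by rewrite /w /=; apply: mem_last.
have wx : w != x by apply: contraTneq wp => ->; move: hx => /= /andP [].
have wu : w != u.
  by apply: contraNneq hu => <-; rewrite inE wp orbT.
exists D2; split.
- have uw : u != w by rewrite eq_sym.
  by rewrite (G3 u ux uw) Fu.
- by rewrite G2 (Fo w wu wx).
- move=> v hvu hvw; case: (eqVneq v x) => [->|hvx].
    by move: G1; rewrite Fx; lia.
  by rewrite G3 // Fo.
- exact: ltn_trans G4 dlt.
Qed.

Lemma mono_lo fv (a c : nat) : ge_lo fv a%:Z -> (a <= c)%N -> ge_lo fv c%:Z.
Proof. by case: fv => //= b; lia. Qed.
Lemma mono_hi gv (a c : nat) : le_hi gv a%:Z -> (c <= a)%N -> le_hi gv c%:Z.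
Proof. by case: gv => //= b; lia. Qed.
Lemma lt_le_hi gv (a c : nat) : lt_hi gv a%:Z -> (c <= a.+1)%N -> le_hi gv c%:Z.
Proof. by case: gv => //= b; lia. Qed.
Lemma gt_ge_lo fv (a c : nat) : gt_lo fv a%:Z -> (c.+1 >= a)%N -> ge_lo fv c%:Z.
Proof. by case: fv => //= b; lia. Qed.
Lemma le_lt_hi gv (a c : nat) : le_hi gv a%:Z -> (c < a)%N -> lt_hi gv c%:Z.
Proof. by case: gv => //= b; lia. Qed.
Lemma ge_gt_lo fv (a c : nat) : ge_lo fv a%:Z -> (a < c)%N -> gt_lo fv c%:Z.
Proof. by case: fv => //= b; lia. Qed.

Lemma exp_ineq1 N b c : 1 < N -> b <= c -> N ^ c + N ^ b.+1 <= N ^ c.+1 + N ^ b.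
Proof.
move=> N1 hbc; case: (ltngtP b c) hbc => // [hbc _|-> _]; last by lia.
have h1 : N ^ b.+1 <= N ^ c by rewrite leq_pexp2l //; lia.
have h2 : 2 * N ^ c <= N ^ c.+1 by rewrite expnS leq_mul2r N1 orbT.
lia.
Qed.

Lemma exp_ineq2 N a c : 1 < N -> a < c -> N ^ a.+1 + N ^ c < N ^ a + N ^ c.+1.
Proof.
move=> N1 hac.
have h1 : N ^ a.+1 <= N ^ c by rewrite leq_pexp2l //; lia.
have h2 : 2 * N ^ c <= N ^ c.+1 by rewrite expnS leq_mul2r N1 orbT.
have h3 : 0 < N ^ a by rewrite expn_gt0; lia.
lia.
Qed.

Lemma Phi_swap (V : finType) N (x y : V -> nat) s t : s != t ->
  (forall v, v != s -> v != t -> x v = y v) ->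
  \sum_v N ^ x v + (N ^ y s + N ^ y t) = \sum_v N ^ y v + (N ^ x s + N ^ x t).
Proof.
move=> st ho.
have D2 : forall F : V -> nat, \sum_v F v = F s + (F t + \sum_(v | (v != s) && (v != t)) F v).
  by move=> F; rewrite (bigD1 s) //= (bigD1 t) 1?eq_sym.
rewrite !D2.
have -> : \sum_(i | (i != s) && (i != t)) N ^ x i = \sum_(i | (i != s) && (i != t)) N ^ y i.
  by apply: eq_bigr => v /andP [h1 h2]; rewrite ho.
lia.
Qed.

Lemma sum_eq_in (V : finType) (X : {set V}) h : \sum_(v in X) (h == v) = (h \in X).
Proof.
case: (boolP (h \in X)) => hX.
  rewrite (bigD1 h) //= eqxx big1 // => v /andP [_ hv]; by rewrite eq_sym (negbTE hv).
by rewrite big1 // => v hv; case: eqP => // eh; rewrite eh hv in hX.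
Qed.

Definition Phi (V E : finType) (ends : E -> V * V) (D : {ffun E -> bool}) : nat :=
  \sum_v (#|V|.+1) ^ indeg ends D v.

Lemma lex_Phi (V E : finType) (ends : E -> V * V) (D D' : {ffun E -> bool}) :
  lexlt (dec_vec ends D') (dec_vec ends D) <-> Phi ends D' < Phi ends D.
Proof.
have ph : forall D0, phi #|V|.+1 (dec_vec ends D0) = Phi ends D0.
  move=> D0; rewrite /phi /dec_vec /Phi (perm_big _ (permEl (perm_sort _ _))) /= big_map.
  by rewrite big_enum.
have sz : forall D0, size (dec_vec ends D0) = #|V|.
  by move=> D0; rewrite /dec_vec size_sort size_map -cardE.
have so : forall D0, sorted geq (dec_vec ends D0).
  move=> D0; apply: sort_sorted => a b; exact: leq_total.
rewrite -!ph; apply: lex_phi; by rewrite ?sz.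
Qed.

Lemma sum_indeg (V E : finType) (ends : E -> V * V) D (X : {set V}) :
  \sum_(v in X) indeg ends D v = \sum_e (Defs.ohead ends D e \in X).
Proof.
under eq_bigr do rewrite indeg_sum.
rewrite exchange_big /=; apply: eq_bigr => e _; exact: sum_eq_in.
Qed.

Lemma count_closed (V E : finType) (ends : E -> V * V) (Dr D : {ffun E -> bool}) (X : {set V}) :
  (forall e, Dr e != D e -> Defs.ohead ends Dr e \in X -> otail ends Dr e \in X) ->
  \sum_(v in X) indeg ends Dr v <= \sum_(v in X) indeg ends D v.
Proof.
move=> hc; rewrite !sum_indeg; apply: leq_sum => e _.
case: (boolP (Dr e != D e)) => h.
  have -> : Defs.ohead ends D e = otail ends Dr e.
    by rewrite /Defs.ohead /otail; move: h; case: (Dr e); case: (D e).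
  by case: (boolP (Defs.ohead ends Dr e \in X)) => // /(hc e h) ->.
by move: h; rewrite negbK => /eqP h; rewrite /Defs.ohead h.
Qed.

Definition NIP (V E : finType) (ends : E -> V * V) f g D :=
  ~ (exists s t : V,
       [/\ dipath ends D s t,
           indeg ends D s + 2 <= indeg ends D t,
           lt_hi (g s) (indeg ends D s)%:Z
         & gt_lo (f t) (indeg ends D t)%:Z]).

Lemma decB (V E : finType) (ends : E -> V * V) f g (D : {ffun E -> bool}) :
  fg_bounded ends f g D -> NIP ends f g D ->
  forall n D', diffc D D' < n -> fg_bounded ends f g D' -> Phi ends D <= Phi ends D'.
Proof.
move=> hD hN; elim=> [//|n IH] D' hn hD'.
case: (boolP [forall v, indeg ends D v <= indeg ends D' v]) => hall.
  apply: leq_sum => v _; rewrite leq_pexp2l //; exact: (forallP hall).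
move: hall; rewrite negb_forall => /existsP [t]; rewrite -ltnNge => ht.
set R := [set v | connect (HR ends D D') v t].
have tR : t \in R by rewrite inE connect0.
have [s sR hs] : exists2 s, s \in R & indeg ends D s < indeg ends D' s.
  case: (boolP [exists s in R, indeg ends D s < indeg ends D' s]).
    by case/existsP => s /andP [h1 h2]; exists s.
  rewrite negb_exists => /forallP hno.
  have c1 := @count_closed V E ends D D' R.
  have : \sum_(v in R) indeg ends D v <= \sum_(v in R) indeg ends D' v.
    apply: c1 => e he; rewrite !inE => hh; apply: connect_trans hh.
    apply: connect1; apply/existsP; exists e; by rewrite he !eqxx.
  rewrite (bigD1 t) //= [X in _ <= X](bigD1 t) //=.
  have : \sum_(i in R | i != t) indeg ends D' i <= \sum_(i in R | i != t) indeg ends D i.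
    apply: leq_sum => v /andP [hv _]; have := hno v; rewrite hv /= -leqNgt; exact.
  lia.
move: sR; rewrite inE => /connectP [p hp tl].
have st : s != t by apply/eqP => e; subst s; lia.
clear tR R; subst t; move: st ht hs; case: (shortenP hp) => p' hp' hu _ st ht hs {hp}.
have pn : p' != [::] by apply/eqP => pe; move: st; rewrite pe eqxx.
set t := last s p' in ht hs st *.
have [D2 [G1 G2 G3 G4]] := flip_path hu hp' pn.
rewrite -/t in G1 G2 G3.
have hpath : dipath ends D s t.
  apply/connectP; exists p' => //; apply: sub_path hp' => a b /existsP [e /and3P [_ h2 h3]].
  by apply/existsP; exists e; rewrite h2 h3.
have hle : indeg ends D t <= indeg ends D s + 1.
  rewrite leqNgt; apply/negP => hlt; apply: hN; exists s, t; split.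
  - exact: hpath.
  - lia.
  - by case/andP: (hD' s) => _ h; apply: le_lt_hi h hs.
  - by case/andP: (hD' t) => h _; apply: ge_gt_lo h ht.
have hD2 : fg_bounded ends f g D2.
  move=> v; case: (eqVneq v s) => [->|vs].
    case/andP: (hD s) => h1 _; case/andP: (hD' s) => _ h2.
    by rewrite (mono_lo h1) ?(mono_hi h2) //; lia.
  case: (eqVneq v t) => [->|vt].
    case/andP: (hD t) => _ h1; case/andP: (hD' t) => h2 _.
    by rewrite (mono_lo h2) ?(mono_hi h1) //; lia.
  by rewrite G3 //; exact: hD'.
have N1 : 1 < #|V|.+1 by apply/card_gt0P; exists s.
have sw := @Phi_swap V #|V|.+1 (indeg ends D2) (indeg ends D') s t st G3.
have ie := @exp_ineq1 #|V|.+1 (indeg ends D' t) (indeg ends D2 s) N1 ltac:(lia).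
have e1 : (indeg ends D' t).+1 = indeg ends D2 t by lia.
have e2 : (indeg ends D2 s).+1 = indeg ends D' s by lia.
rewrite e1 e2 in ie.
have := IH D2 ltac:(lia) hD2.
rewrite /Phi; lia.
Qed.

Theorem theorem5p1 (V E : finType) (ends : E -> V * V)
    (f g : V -> option int) (hfg : bounds_ok f g)
    (D : {ffun E -> bool}) (hD : fg_bounded ends f g D) :
  decmin ends f g D <->
  ~ (exists s t : V,
       [/\ dipath ends D s t,
           indeg ends D s + 2 <= indeg ends D t,
           lt_hi (g s) (indeg ends D s)%:Z
         & gt_lo (f t) (indeg ends D t)%:Z]).
Proof.
split; last first.
  move=> hN; split => // D' hD' /lex_Phi; apply/negP; rewrite -leqNgt.
  exact: (decB hD hN (ltnSn (diffc D D')) hD').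
case=> _ hmin [s [t [hp h2 hlt hgt]]].
set Dn : {ffun E -> bool} := [ffun e => ~~ D e].
have c : connect (HR ends Dn D) t s.
  have c0 : connect (fun x => (arcrel ends D)^~ x) t s by rewrite connect_rev.
  move: c0; apply: connect_sub => a b hab; apply: connect1.
  case/existsP: hab => e /andP [h1 h3]; apply/existsP; exists e.
  rewrite /Dn /otail /Defs.ohead !ffunE -(eqP h1) -(eqP h3) /otail /Defs.ohead.
  by case: (D e); rewrite !eqxx.
have st : s != t by apply/eqP => e; subst s; lia.
move/connectP: c => [p hp0 tl]; subst s.
move: st h2 hlt hgt hp; case: (shortenP hp0) => p' hp' hu _ st h2 hlt hgt hp {hp0}.
have pn : p' != [::] by apply/eqP => pe; move: st; rewrite pe eqxx.
have [D2 [G1 G2 G3 G4]] := flip_path hu hp' pn.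
set s := last t p' in st h2 hlt hgt hp G2 G3.
have hD2 : fg_bounded ends f g D2.
  move=> v; case: (eqVneq v s) => [->|vs].
    case/andP: (hD s) => h1 _.
    by rewrite (mono_lo h1) ?(lt_le_hi hlt) //; lia.
  case: (eqVneq v t) => [->|vt].
    case/andP: (hD t) => _ h1.
    by rewrite (gt_ge_lo hgt) ?(mono_hi h1) //; lia.
  by rewrite G3 //; exact: hD.
have ts : t != s by rewrite eq_sym.
have N1 : 1 < #|V|.+1 by apply/card_gt0P; exists s.
have sw := @Phi_swap V #|V|.+1 (indeg ends D2) (indeg ends D) t s ts G3.
have ie := @exp_ineq2 #|V|.+1 (indeg ends D s) (indeg ends D2 t) N1 ltac:(lia).
have e1 : (indeg ends D s).+1 = indeg ends D2 s by lia.
have e2 : (indeg ends D2 t).+1 = indeg ends D t by lia.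
rewrite e1 e2 in ie.
apply: (hmin D2 hD2); apply/lex_Phi; rewrite /Phi; lia.
Qed.
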